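(* For every $\mathrm{PTL}\times\mathbf{S5}$ formula $\varphi$, let $t_1(\varphi)$ be the $\mathrm{SLTL}$ formula obtained from $\varphi$ by replacing every occurrence of $\Diamond$ by $\Diamond_{*}$ and every occurrence of $\Box$ by $\Box_{*}$. Then $\varphi$ is $\mathrm{PTL}\times\mathbf{S5}$-satisfiable if and only if $t_1(\varphi)$ is $\mathrm{SLTL}$-satisfiable.
   Context: Fix a countably infinite set $\mathcal{P}$ of propositional variables and a countably infinite set $\mathcal{S}$ of standpoint symbols containing a distinguished universal standpoint symbol $*$. SLTL: formulae are given by $\varphi ::= p \mid s \preceq s' \mid \neg\varphi \mid \varphi\wedge\varphi \mid \Diamond_s\varphi \mid \Box_s\varphi \mid X\varphi \mid \varphi\,U\,\varphi$ with $p\in\mathcal{P}$, $s,s'\in\mathcal{S}$. A model is $M=(\Pi,\lambda)$ where $\Pi\neq\emptyset$ is a set of traces $\sigma:\mathbb{N}\to 2^{\mathcal{P}}$ and $\lambda:\mathcal{S}\to 2^{\Pi}\setminus\{\emptyset\}$ with $\lambda( * )=\Pi$. For $\sigma\in\Pi$, $i\in\mathbb{N}$: $M,\sigma,i\models p$ iff $p\in\sigma(i)$; $M,\sigma,i\models s\preceq s'$ iff $\lambda(s)\subseteq\lambda(s')$; Boolean clauses as usual; $M,\sigma,i\models\Diamond_s\psi$ iff $M,\sigma',i\models\psi$ for some $\sigma'\in\lambda(s)$; $M,\sigma,i\models\Box_s\psi$ iff $M,\sigma',i\models\psi$ for all $\sigma'\in\lambda(s)$; $M,\sigma,i\models X\psi$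 iff $M,\sigma,i+1\models\psi$; $M,\sigma,i\models\psi\,U\,\chi$ iff there is $i'\ge i$ with $M,\sigma,i'\models\chi$ and $M,\sigma,i''\models\psi$ for all $i\le i''<i'$. A formula $\varphi$ is SLTL-satisfiable iff there exist a model $M=(\Pi,\lambda)$ and $\sigma\in\Pi$ with $M,\sigma,0\models\varphi$. $\mathrm{PTL}\times\mathbf{S5}$: formulae are given by $\varphi ::= p \mid \neg\varphi\mid\varphi\wedge\varphi\mid\Diamond\varphi\mid\Box\varphi\mid X\varphi\mid\varphi\,U\,\varphi$. A model is $M=(\mathbb{N}\times W,R,L)$ with $W\neq\emptyset$, $R$ an equivalence relation on $W$, and $L:\mathbb{N}\times W\to 2^{\mathcal{P}}$. Semantics: $M,(n,w)\models p$ iff $p\in L(n,w)$; Boolean clauses as usual; $M,(n,w)\models\Diamond\psi$ iff $M,(n,w')\models\psi$ for some $w'$ with $wRw'$; $M,(n,w)\models\Box\psi$ iff $M,(n,w')\models\psi$ for all $w'$ with $wRw'$; $M,(n,w)\models X\psi$ iff $M,(n+1,w)\models\psi$; $M,(n,w)\models\psi\,U\,\chi$ iff there is $n'\ge n$ with $M,(n',w)\models\chi$ and $M,(n'',w)\models\psi$ for all $n\le n''<n'$. A formula is satisfiable iff it holds at some $(n,w)$ of some model. *)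

(* Defs.v *)
From Stdlib Require Import Arith.

(* Propositional variables: nat (countably infinite).
   Standpoint symbols: nat (countably infinite); the universal standpoint * is 0. *)
Definition pvar := nat.
Definition stand := nat.
Definition star : stand := 0.

Inductive sltl : Type :=
| SVar : pvar -> sltl
| SSub : stand -> stand -> sltl
| SNeg : sltl -> sltl
| SAnd : sltl -> sltl -> sltl
| SDia : stand -> sltl -> sltl
| SBox : stand -> sltl -> sltl
| SNext : sltl -> sltl
| SUntil : sltl -> sltl -> sltl.

(* A trace σ : ℕ → 2^P, with subsets of P represented as predicates. *)
Definition trace := nat -> pvar -> Prop.

Record sltl_model := {
  Pi : trace -> Prop;
  lam : stand -> trace -> Prop;
  Pi_nonempty : exists s, Pi s;
  lam_sub : forall s t, lam s t -> Pi t;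
  lam_nonempty : forall s, exists t, lam s t;
  lam_star : forall t, lam star t <-> Pi t
}.

Fixpoint sltl_sat (M : sltl_model) (sg : trace) (i : nat) (f : sltl) : Prop :=
  match f with
  | SVar p => sg i p
  | SSub s s' => forall t, lam M s t -> lam M s' t
  | SNeg g => ~ sltl_sat M sg i g
  | SAnd g h => sltl_sat M sg i g /\ sltl_sat M sg i h
  | SDia s g => exists t, lam M s t /\ sltl_sat M t i g
  | SBox s g => forall t, lam M s t -> sltl_sat M t i g
  | SNext g => sltl_sat M sg (S i) g
  | SUntil g h => exists i', i <= i' /\ sltl_sat M sg i' h /\
                   forall i'', i <= i'' < i' -> sltl_sat M sg i'' g
  end.

Definition sltl_satisfiable (f : sltl) : Prop :=
  exists (M : sltl_model) (sg : trace), Pi M sg /\ sltl_sat M sg 0 f.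

Inductive ptl5 : Type :=
| PVar : pvar -> ptl5
| PNeg : ptl5 -> ptl5
| PAnd : ptl5 -> ptl5 -> ptl5
| PDia : ptl5 -> ptl5
| PBox : ptl5 -> ptl5
| PNext : ptl5 -> ptl5
| PUntil : ptl5 -> ptl5 -> ptl5.

Record s5_model := {
  W : Type;
  W_nonempty : inhabited W;
  R : W -> W -> Prop;
  R_refl : forall w, R w w;
  R_sym : forall w v, R w v -> R v w;
  R_trans : forall w v u, R w v -> R v u -> R w u;
  L : nat -> W -> pvar -> Prop
}.

Fixpoint ptl5_sat (M : s5_model) (n : nat) (w : W M) (f : ptl5) : Prop :=
  match f with
  | PVar p => L M n w p
  | PNeg g => ~ ptl5_sat M n w g
  | PAnd g h => ptl5_sat M n w g /\ ptl5_sat M n w h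
  | PDia g => exists w', R M w w' /\ ptl5_sat M n w' g
  | PBox g => forall w', R M w w' -> ptl5_sat M n w' g
  | PNext g => ptl5_sat M (S n) w g
  | PUntil g h => exists n', n <= n' /\ ptl5_sat M n' w h /\
                   forall n'', n <= n'' < n' -> ptl5_sat M n'' w g
  end.

Definition ptl5_satisfiable (f : ptl5) : Prop :=
  exists (M : s5_model) (n : nat) (w : W M), ptl5_sat M n w f.

Fixpoint t1 (f : ptl5) : sltl :=
  match f with
  | PVar p => SVar p
  | PNeg g => SNeg (t1 g)
  | PAnd g h => SAnd (t1 g) (t1 h)
  | PDia g => SDia star (t1 g)
  | PBox g => SBox star (t1 g)
  | PNext g => SNext (t1 g)
  | PUntil g h => SUntil (t1 g) (t1 h)
  end.

(* Main.v *)
Require Import Defs.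
From Stdlib Require Import Arith Lia.

Section Fwd.
Variable M : s5_model.
Variable n : nat.
Variable w : W M.

Definition sig_of (v : W M) : trace := fun i p => L M (n + i) v p.
Definition PiF (t : trace) : Prop := exists v, R M w v /\ t = sig_of v.

Program Definition fmodel : sltl_model :=
  {| Pi := PiF; lam := fun _ => PiF |}.
Next Obligation. exists (sig_of w), w. split; [apply R_refl | reflexivity]. Qed.
Next Obligation. exists (sig_of w), w. split; [apply R_refl | reflexivity]. Qed.
Next Obligation. tauto. Qed.

Lemma fwd_equiv : forall f v i, R M w v ->
  (ptl5_sat M (n + i) v f <-> sltl_sat fmodel (sig_of v) i (t1 f)).
Proof.
  induction f; intros v i Hv; simpl.
  - unfold sig_of; tauto.
  - rewrite IHf; tauto.
  - rewrite IHf1, IHf2 by assumption; tauto.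
  - split.
    + intros [v' [Hr Hs]]. exists (sig_of v'). split.
      * exists v'. split; [eapply R_trans; eauto | reflexivity].
      * apply IHf; [eapply R_trans; eauto | exact Hs].
    + intros [t [[v' [Hr ->]] Hs]]. exists v'. split.
      * eapply R_trans; [apply R_sym; exact Hv | exact Hr].
      * apply IHf; assumption.
  - split.
    + intros H t [v' [Hr ->]]. apply IHf; [assumption|].
      apply H. eapply R_trans; [apply R_sym; exact Hv | exact Hr].
    + intros H v' Hr. apply (IHf v' i); [eapply R_trans; eauto|].
      apply H. exists v'. split; [eapply R_trans; eauto | reflexivity].
  - replace (S (n + i)) with (n + S i) by lia. apply IHf; assumption.
  - split.
    + intros [n' [Hle [Hh Hg]]]. exists (n' - n). split; [lia|]. split.
      * apply IHf2; [assumption|]. replace (n + (n' - n)) with n' by lia. exact Hh.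
      * intros i'' Hi. apply IHf1; [assumption|]. apply Hg. lia.
    + intros [i' [Hle [Hh Hg]]]. exists (n + i'). split; [lia|]. split.
      * apply IHf2; assumption.
      * intros n'' Hi. replace n'' with (n + (n'' - n)) by lia.
        apply IHf1; [assumption|]. apply Hg. lia.
Qed.
End Fwd.

Section Bwd.
Variable M : sltl_model.
Variable s0 : trace.
Variable Hs0 : Pi M s0.

Definition WB := { t : trace | Pi M t }.

Definition bmodel : s5_model :=
  {| W := WB; W_nonempty := inhabits (exist _ s0 Hs0);
     R := fun _ _ => True;
     R_refl := fun _ => I; R_sym := fun _ _ _ => I; R_trans := fun _ _ _ _ _ => I;
     L := fun i (x : WB) p => proj1_sig x i p |}.

Lemma bwd_equiv : forall f (x : WB) i,
  (ptl5_sat bmodel i x f <-> sltl_sat M (proj1_sig x) i (t1 f)).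
Proof.
  induction f; intros x i; simpl.
  - tauto.
  - rewrite IHf; tauto.
  - rewrite IHf1, IHf2; tauto.
  - split.
    + intros [x' [_ Hs]]. exists (proj1_sig x'). split.
      * apply lam_star. exact (proj2_sig x').
      * apply IHf; exact Hs.
    + intros [t [Ht Hs]]. apply lam_star in Ht. exists (exist _ t Ht).
      split; [exact I|]. apply IHf; exact Hs.
  - split.
    + intros H t Ht. apply lam_star in Ht.
      apply (IHf (exist _ t Ht)). apply H. exact I.
    + intros H x' _. apply IHf. apply H. apply lam_star. exact (proj2_sig x').
  - apply IHf.
  - split.
    + intros [n' [Hle [Hh Hg]]]. exists n'. split; [lia|]. split.
      * apply IHf2; exact Hh.
      * intros i'' Hi. apply IHf1. apply Hg. lia.
    + intros [n' [Hle [Hh Hg]]]. exists n'. split; [lia|]. split.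
      * apply IHf2; exact Hh.
      * intros i'' Hi. apply IHf1. apply Hg. lia.
Qed.
End Bwd.

Theorem lemma1 : forall phi : ptl5,
  ptl5_satisfiable phi <-> sltl_satisfiable (t1 phi).
Proof.
  intros phi. split.
  - intros [M [n [w H]]]. exists (fmodel M n w), (sig_of M n w). split.
    + exists w. split; [apply R_refl | reflexivity].
    + apply (fwd_equiv M n w phi w 0 (R_refl M w)).
      rewrite Nat.add_0_r. exact H.
  - intros [M [sg [Hp H]]]. exists (bmodel M sg Hp), 0, (exist _ sg Hp).
    apply bwd_equiv. exact H.
Qed.
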